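(* Let $s=(x,y,u,v)\in\mathbb{R}^4$ with $x,y,u,v\ge0$, $x+y=2$ and $u+v=2$, and write $W^k(s)=(x^{(k)},y^{(k)},u^{(k)},v^{(k)})$. If $y^{(k)}v^{(k)}=0$ for every $k\ge0$, then $y^{(k)}=v^{(k)}=0$ for every $k\ge0$.
   Context: $W:\mathbb{R}^4\to\mathbb{R}^4$ is the map $W(x,y,u,v)=(x',y',u',v')$ with $x'=\tfrac12 xu+\tfrac14 yu$, $y'=\tfrac12 xv+\tfrac14 yu+\tfrac13 yv$, $u'=\tfrac12 xu+\tfrac12 xv+\tfrac14 yu+\tfrac13 yv$, $v'=\tfrac14 yu+\tfrac13 yv$. $W^k$ denotes the $k$-fold iterate ($W^0$ the identity). *)

(* Defs.v *)
From Stdlib Require Import Reals.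
Open Scope R_scope.

Definition R4 : Type := (R * R * R * R)%type.

Definition W (s : R4) : R4 :=
  let '(x, y, u, v) := s in
  ( 1/2 * x * u + 1/4 * y * u,
    1/2 * x * v + 1/4 * y * u + 1/3 * y * v,
    1/2 * x * u + 1/2 * x * v + 1/4 * y * u + 1/3 * y * v,
    1/4 * y * u + 1/3 * y * v ).

Fixpoint Witer (k : nat) (s : R4) : R4 :=
  match k with
  | O => s
  | S k' => W (Witer k' s)
  end.

Definition px (s : R4) : R := let '(x, _, _, _) := s in x.
Definition py (s : R4) : R := let '(_, y, _, _) := s in y.
Definition pu (s : R4) : R := let '(_, _, u, _) := s in u.
Definition pv (s : R4) : R := let '(_, _, _, v) := s in v.

(* Main.v *)
Require Import Defs.
From Stdlib Require Import Reals Lra Psatz.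
Open Scope R_scope.

Theorem lemma3p4 (x y u v : R) :
  0 <= x -> 0 <= y -> 0 <= u -> 0 <= v ->
  x + y = 2 -> u + v = 2 ->
  (forall k : nat, py (Witer k (x, y, u, v)) * pv (Witer k (x, y, u, v)) = 0) ->
  forall k : nat, py (Witer k (x, y, u, v)) = 0 /\ pv (Witer k (x, y, u, v)) = 0.
Proof.
  intros hx hy hu hv hxy huv H.
  assert (H0 : y = 0 /\ v = 0).
  { pose proof (H 0%nat) as H0. pose proof (H 2%nat) as H2. simpl in H0, H2.
    destruct (Rmult_integral _ _ H0) as [Ey|Ev].
    - subst y. split; [reflexivity|].
      assert (x = 2) by lra. subst x. assert (u = 2 - v) by lra. subst u.
      ring_simplify in H2. nra.
    - subst v. assert (u = 2) by lra. subst u. assert (x = 2 - y) by lra. subst x.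
      ring_simplify in H2. split; [|reflexivity]. nra. }
  destruct H0 as [Ey Ev]. subst y v.
  induction k as [|k IH]; simpl; [lra|].
  destruct (Witer k (x, 0, u, 0)) as [[[a b] c] d]. simpl in *.
  destruct IH as [-> ->]. split; ring.
Qed.
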